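(* Let $d\ge1$, $z\ge 0$, let $0<\varphi_1\le\cdots\le\varphi_d$ and let $\tilde v_1,\ldots,\tilde v_d\in\mathbb C$ be nonzero. Let $\varphi_{\max}=\varphi_d$ and define, for $\lambda>0$ with $\lambda\notin\{\varphi_1,\dots,\varphi_d\}$, $$f(\lambda)=\lambda^2\sum_{m=1}^d\frac{\varphi_m|\tilde v_m|^2}{(\lambda-\varphi_m)^2}-\lambda+z.$$ Then $f$ has (1) no roots smaller than or equal to $z$; (2) zero, one, or two roots in $(z,\varphi_k)$, where $\varphi_k$ is the smallest eigenvalue $\varphi_m$ larger than $z$ (if such an eigenvalue exists); (3) zero, one, or two roots in $(\varphi_{L-1},\varphi_L)$ for each $L=k+1,\ldots,d$; (4) a unique root in the interval $(\max(\varphi_{\max},z),+\infty)$.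
   Context: This lemma is stated under the standing assumption that all indices are in the support $\mathcal S=\{m:\varphi_m|\tilde v_m|^2\neq0\}$, i.e. $\mathcal S=\{1,\dots,d\}$; here $\varphi_1,\ldots,\varphi_d$ are the eigenvalues of a Hermitian positive semi-definite matrix $\mathbf U$ and $\tilde v_m$ the coordinates of a vector $\mathbf v$ in the corresponding eigenbasis (this origin is not needed for the statement). *)

(* Defs.v *)
From HB Require Import structures.
From mathcomp Require Import all_boot all_order all_algebra.
From mathcomp Require Import complex.
Set Implicit Arguments. Unset Strict Implicit. Unset Printing Implicit Defensive.
Import Order.TTheory GRing.Theory Num.Theory.
Local Open Scope ring_scope.

(* Division is total in MathComp; f is only
   meaningful (and only used) at l > 0 with l not an eigenvalue. *)
Definition fsec (R : rcfType) (d : nat) (phi : 'I_d -> R) (v : 'I_d -> R[i])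
  (z l : R) : R :=
  l ^+ 2 * (\sum_(m < d) phi m * ComplexField.Normc.normc (v m) ^+ 2 / (l - phi m) ^+ 2) - l + z.

Definition is_root_f (R : rcfType) (d : nat) (phi : 'I_d -> R) (v : 'I_d -> R[i])
  (z l : R) : Prop :=
  0 < l /\ (forall m : 'I_d, l != phi m) /\ fsec phi v z l = 0.

Definition at_most_two_roots_in (R : rcfType) (d : nat) (phi : 'I_d -> R)
  (v : 'I_d -> R[i]) (z a b : R) : Prop :=
  forall l1 l2 l3 : R,
    a < l1 < b -> a < l2 < b -> a < l3 < b ->
    is_root_f phi v z l1 -> is_root_f phi v z l2 -> is_root_f phi v z l3 ->
    l1 = l2 \/ l1 = l3 \/ l2 = l3.

(* Main.v *)
From HB Require Import structures.
From mathcomp Require Import all_boot all_order all_algebra.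
From mathcomp Require Import complex polyrcf ring lra.
Require Import Defs.
Import Order.TTheory GRing.Theory Num.Theory.
Set Implicit Arguments. Unset Strict Implicit. Unset Printing Implicit Defensive.
Local Open Scope ring_scope.
Lemma normc_gt0 (R : rcfType) (x : R[i]) : x != 0 -> 0 < ComplexField.Normc.normc x.
Proof.
move=> hx; have h0 : 0 <= ComplexField.Normc.normc x by case: x {hx} => a b /=; exact: sqrtr_ge0.
rewrite lt_neqAle h0 andbT eq_sym; apply/eqP => /ComplexField.Normc.eq0_normc; exact/eqP.
Qed.
Lemma sum_pos (R : rcfType) n (F : 'I_n -> R) : (0 < n)%N -> (forall i, 0 < F i) -> 0 < \sum_(i < n) F i.
Proof.
case: n F => // n F _ hF; rewrite big_ord_recl.
have := hF ord0; have : 0 <= \sum_(i < n) F (lift ord0 i) by apply: sumr_ge0 => i _; exact/ltW.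
lra.
Qed.
Lemma sqr_pos (R : rcfType) (x : R) : x != 0 -> 0 < x ^+ 2.
Proof. move=> hx; rewrite lt_neqAle sqr_ge0 andbT eq_sym expf_neq0 //. Qed.

Lemma conv_t (R : rcfType) (p t1 t2 t3 : R) : 0 < p -> 0 < t1 -> 0 < t2 -> 0 < t3 ->
  t1 != t2 -> t1 != t3 -> t2 != t3 ->
  ((0 < 1 - p * t1) && (0 < 1 - p * t2) && (0 < 1 - p * t3)) ||
  ((1 - p * t1 < 0) && (1 - p * t2 < 0) && (1 - p * t3 < 0)) ->
  0 < ((t1 - t2) * (t1 - t3))^-1 * (t1 / (1 - p * t1) ^+ 2)
    + ((t2 - t1) * (t2 - t3))^-1 * (t2 / (1 - p * t2) ^+ 2)
    + ((t3 - t1) * (t3 - t2))^-1 * (t3 / (1 - p * t3) ^+ 2).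
Proof.
move=> hp h1 h2 h3 n12 n13 n23 hs.
have hs1 : 1 - p * t1 != 0 by case/orP: hs => /andP[/andP[a b] c]; [by rewrite gt_eqF | by rewrite lt_eqF].
have hs2 : 1 - p * t2 != 0 by case/orP: hs => /andP[/andP[a b] c]; [by rewrite gt_eqF | by rewrite lt_eqF].
have hs3 : 1 - p * t3 != 0 by case/orP: hs => /andP[/andP[a b] c]; [by rewrite gt_eqF | by rewrite lt_eqF].
have d12 : t1 - t2 != 0 by rewrite subr_eq0.
have d13 : t1 - t3 != 0 by rewrite subr_eq0.
have d23 : t2 - t3 != 0 by rewrite subr_eq0.
have d21 : t2 - t1 != 0 by rewrite subr_eq0 eq_sym.
have d31 : t3 - t1 != 0 by rewrite subr_eq0 eq_sym.
have d32 : t3 - t2 != 0 by rewrite subr_eq0 eq_sym.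
set s1 := 1 - p * t1 in hs hs1 *; set s2 := 1 - p * t2 in hs hs2 *; set s3 := 1 - p * t3 in hs hs3 *.
have E : ((t1 - t2) * (t1 - t3))^-1 * (t1 / s1 ^+ 2)
    + ((t2 - t1) * (t2 - t3))^-1 * (t2 / s2 ^+ 2)
    + ((t3 - t1) * (t3 - t2))^-1 * (t3 / s3 ^+ 2)
    = p * (s1 * s2 + s1 * s3 + s2 * s3 - s1 * s2 * s3) / (s1 * s2 * s3) ^+ 2.
  rewrite /s1 /s2 /s3; field.
  by rewrite -/s1 -/s2 -/s3 hs1 hs2 hs3 d12 d13 d23 d21 d31 d32.
rewrite E; apply: divr_gt0; last by apply: sqr_pos; rewrite !mulf_neq0.
apply: mulr_gt0 => //.
case/orP: hs => /andP[/andP[a b] c].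
- have u3 : 0 < 1 - s3 by rewrite /s3; nra.
  have : 0 < s1 * s2 * (1 - s3) by rewrite !mulr_gt0.
  have : 0 < s3 * (s1 + s2) by rewrite mulr_gt0 // addr_gt0.
  move=> *; nra.
- have : 0 < s1 * s2 by rewrite nmulr_rgt0.
  have : 0 < s1 * s3 by rewrite nmulr_rgt0.
  have : 0 < s2 * s3 by rewrite nmulr_rgt0.
  have : s1 * s2 * s3 < 0 by rewrite pmulr_rlt0 // nmulr_rgt0.
  move=> *; nra.
Qed.
Definition Wt (R : rcfType) d (phi : 'I_d -> R) (v : 'I_d -> R[i]) (m : 'I_d) : R :=
  phi m * ComplexField.Normc.normc (v m) ^+ 2.
Definition Kf (R : rcfType) d (phi : 'I_d -> R) (v : 'I_d -> R[i]) (z l : R) : R :=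
  \sum_(m < d) Wt phi v m * (l / (l - phi m) ^+ 2) + z * l^-1.

Lemma Wt_gt0 (R : rcfType) d (phi : 'I_d -> R) (v : 'I_d -> R[i]) m :
  0 < phi m -> v m != 0 -> 0 < Wt phi v m.
Proof. by move=> hp hv; rewrite /Wt mulr_gt0 // exprn_gt0 // normc_gt0. Qed.

Lemma fsec_K (R : rcfType) d (phi : 'I_d -> R) (v : 'I_d -> R[i]) (z l : R) :
  l != 0 -> fsec phi v z l = l * (Kf phi v z l - 1).
Proof.
move=> hl; rewrite /fsec /Kf.
have -> : l ^+ 2 * (\sum_(m < d) phi m * ComplexField.Normc.normc (v m) ^+ 2 / (l - phi m) ^+ 2)
  = l * \sum_(m < d) Wt phi v m * (l / (l - phi m) ^+ 2).
  rewrite !mulr_sumr; apply: eq_bigr => m _; rewrite /Wt; ring.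
rewrite mulrBr mulrDr mulr1 (mulrC z) mulrA divff // mul1r; ring.
Qed.

Lemma root_K (R : rcfType) d (phi : 'I_d -> R) (v : 'I_d -> R[i]) (z l : R) :
  is_root_f phi v z l -> Kf phi v z l = 1.
Proof.
move=> [hl [_ r]]; move: r; rewrite fsec_K ?gt_eqF // => /eqP.
by rewrite mulf_eq0 gt_eqF //= subr_eq0 => /eqP.
Qed.

Lemma sgn_t (R : rcfType) (p l : R) : 0 < l -> 
  ((p < l) -> 0 < 1 - p * l^-1) /\ ((l < p) -> 1 - p * l^-1 < 0).
Proof.
move=> hl; split => h.
  by rewrite subr_gt0 ltr_pdivrMr // mul1r.
by rewrite subr_lt0 ltr_pdivlMr // mul1r.
Qed.

Lemma Kcomb (R : rcfType) d (phi : 'I_d -> R) (v : 'I_d -> R[i]) (z c1 c2 c3 l1 l2 l3 : R) :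
  c1 * Kf phi v z l1 + c2 * Kf phi v z l2 + c3 * Kf phi v z l3 =
   \sum_(m < d) Wt phi v m * (c1 * (l1 / (l1 - phi m) ^+ 2) + c2 * (l2 / (l2 - phi m) ^+ 2)
                        + c3 * (l3 / (l3 - phi m) ^+ 2)) + z * (c1 * l1^-1 + c2 * l2^-1 + c3 * l3^-1).
Proof.
  rewrite /Kf !mulrDr !mulr_sumr.
  have -> : \sum_(m < d) Wt phi v m * (c1 * (l1 / (l1 - phi m) ^+ 2) + c2 * (l2 / (l2 - phi m) ^+ 2)
                        + c3 * (l3 / (l3 - phi m) ^+ 2)) =
     \sum_(m < d) c1 * (Wt phi v m * (l1 / (l1 - phi m) ^+ 2)) +
     \sum_(m < d) c2 * (Wt phi v m * (l2 / (l2 - phi m) ^+ 2)) +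
     \sum_(m < d) c3 * (Wt phi v m * (l3 / (l3 - phi m) ^+ 2)).
    by rewrite -!big_split; apply: eq_bigr => m _ /=; ring.
  ring.
Qed.

Lemma gform (R : rcfType) (p l : R) : 0 < l -> l != p -> l / (l - p) ^+ 2 = l^-1 / (1 - p * l^-1) ^+ 2.
Proof. by move=> hl hlp; field; rewrite subr_eq0 hlp gt_eqF. Qed.

Lemma two_roots (R : rcfType) d (phi : 'I_d -> R) (v : 'I_d -> R[i]) (z a b : R) :
  (0 < d)%N -> (forall m, 0 < phi m) -> (forall m, v m != 0) -> 0 <= a ->
  (forall m, phi m <= a \/ b <= phi m) -> at_most_two_roots_in phi v z a b.
Proof.
move=> hd hpos hv ha hsep l1 l2 l3 /andP[a1 b1] /andP[a2 b2] /andP[a3 b3] r1 r2 r3.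
case: (eqVneq l1 l2) => [->|n12]; first by left.
case: (eqVneq l1 l3) => [->|n13]; first by right; left.
case: (eqVneq l2 l3) => [->|n23]; first by right; right.
exfalso.
have K1 := root_K r1; have K2 := root_K r2; have K3 := root_K r3.
have p1 : 0 < l1 by lra.
have p2 : 0 < l2 by lra.
have p3 : 0 < l3 by lra.
set t1 := l1^-1; set t2 := l2^-1; set t3 := l3^-1.
have q1 : 0 < t1 by rewrite invr_gt0.
have q2 : 0 < t2 by rewrite invr_gt0.
have q3 : 0 < t3 by rewrite invr_gt0.
have m12 : t1 != t2 by rewrite /t1 /t2 (can_eq invrK).
have m13 : t1 != t3 by rewrite /t1 /t3 (can_eq invrK).
have m23 : t2 != t3 by rewrite /t2 /t3 (can_eq invrK).
have d12 : t1 - t2 != 0 by rewrite subr_eq0.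
have d13 : t1 - t3 != 0 by rewrite subr_eq0.
have d23 : t2 - t3 != 0 by rewrite subr_eq0.
have d21 : t2 - t1 != 0 by rewrite subr_eq0 eq_sym.
have d31 : t3 - t1 != 0 by rewrite subr_eq0 eq_sym.
have d32 : t3 - t2 != 0 by rewrite subr_eq0 eq_sym.
set c1 := ((t1 - t2) * (t1 - t3))^-1.
set c2 := ((t2 - t1) * (t2 - t3))^-1.
set c3 := ((t3 - t1) * (t3 - t2))^-1.
have key : forall m, 0 < c1 * (l1 / (l1 - phi m) ^+ 2) + c2 * (l2 / (l2 - phi m) ^+ 2)
                        + c3 * (l3 / (l3 - phi m) ^+ 2).
  move=> m; move: (hpos m) (hsep m) => hp hs; move: (phi m) hp hs => p hp hs.
  have hside : ((p < l1) && (p < l2) && (p < l3)) || ((l1 < p) && (l2 < p) && (l3 < p)).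
    by case: hs => h; apply/orP; [left | right]; rewrite -!andbA; apply/and3P; split; lra.
  have ne : l1 != p /\ l2 != p /\ l3 != p.
    case/orP: hside => /andP[/andP[e1 e2] e3].
      by rewrite (gt_eqF e1) (gt_eqF e2) (gt_eqF e3).
    by rewrite (lt_eqF e1) (lt_eqF e2) (lt_eqF e3).
  case: ne => e1 [e2 e3].
  have g : forall l, 0 < l -> l != p -> l / (l - p) ^+ 2 = l^-1 / (1 - p * l^-1) ^+ 2.
    by move=> l hl hlp; apply: gform.
  rewrite !g //.
  apply: conv_t => //.
  have [s1a s1b] := sgn_t p p1; have [s2a s2b] := sgn_t p p2; have [s3a s3b] := sgn_t p p3.
  case/orP: hside => /andP[/andP[f1 f2] f3]; apply/orP; [left|right]; rewrite -!andbA; apply/and3P; split; auto.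
have E1 : c1 + c2 + c3 = 0 by rewrite /c1 /c2 /c3; field; rewrite d12 d13 d23 d21 d31 d32.
have E2 : c1 * t1 + c2 * t2 + c3 * t3 = 0 by rewrite /c1 /c2 /c3; field; rewrite d12 d13 d23 d21 d31 d32.
have E := Kcomb phi v z c1 c2 c3 l1 l2 l3.
have : 0 < \sum_(m < d) Wt phi v m * (c1 * (l1 / (l1 - phi m) ^+ 2) + c2 * (l2 / (l2 - phi m) ^+ 2)
                        + c3 * (l3 / (l3 - phi m) ^+ 2)).
  by apply: sum_pos => // m; rewrite mulr_gt0 // Wt_gt0.
move=> H; move: E; rewrite K1 K2 K3 !mulr1 E1 -/t1 -/t2 -/t3 E2 mulr0 addr0 => E.
by rewrite -E ltxx in H.
Qed.

Lemma root_gt_z (R : rcfType) d (phi : 'I_d -> R) (v : 'I_d -> R[i]) (z l : R) :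
  (0 < d)%N -> (forall m, 0 < phi m) -> (forall m, v m != 0) -> 0 <= z ->
  is_root_f phi v z l -> z < l.
Proof.
move=> hd hpos hv hz [hl [hne r]]; rewrite ltNge; apply/negP => hlz.
have hS : 0 < \sum_(m < d) phi m * ComplexField.Normc.normc (v m) ^+ 2 / (l - phi m) ^+ 2.
  apply: sum_pos => // m; apply: divr_gt0; first exact: Wt_gt0.
  by apply: sqr_pos; rewrite subr_eq0.
have hX : 0 < l ^+ 2 * \sum_(m < d) phi m * ComplexField.Normc.normc (v m) ^+ 2 / (l - phi m) ^+ 2.
  by rewrite mulr_gt0 // exprn_gt0.
move: r hX; rewrite /fsec.
set X := l ^+ 2 * _ => r hX; lra.
Qed.

Lemma decr (R : rcfType) (p a b : R) : 0 < p -> p < a -> a < b ->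
  b / (b - p) ^+ 2 < a / (a - p) ^+ 2.
Proof.
move=> hp hpa hab; rewrite -subr_gt0.
have ha : a - p != 0 by rewrite subr_eq0 gt_eqF.
have hb : b - p != 0 by rewrite subr_eq0 gt_eqF //; lra.
have -> : a / (a - p) ^+ 2 - b / (b - p) ^+ 2 = (b - a) * (a * b - p ^+ 2) / ((a - p) ^+ 2 * (b - p) ^+ 2).
  by field; rewrite ha hb.
apply: divr_gt0; last by rewrite mulr_gt0 // sqr_pos.
apply: mulr_gt0; first lra.
have : 0 < (a - p) * (b - p) by rewrite mulr_gt0 //; lra.
nra.
Qed.

Lemma uniq_big (R : rcfType) d (phi : 'I_d -> R) (v : 'I_d -> R[i]) (z l l' : R) :
  (0 < d)%N -> (forall m, 0 < phi m) -> (forall m, v m != 0) -> 0 <= z ->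
  (forall m, phi m < l) -> l < l' -> is_root_f phi v z l -> is_root_f phi v z l' -> False.
Proof.
move=> hd hpos hv hz hl hll' r r'.
have K := root_K r; have K' := root_K r'.
have p0 : 0 < l by have := hpos (Ordinal hd); have := hl (Ordinal hd); lra.
have p0' : 0 < l' by lra.
have h1 : 0 < \sum_(m < d) Wt phi v m * (l / (l - phi m) ^+ 2 - l' / (l' - phi m) ^+ 2).
  apply: sum_pos => // m; rewrite mulr_gt0 ?Wt_gt0 // subr_gt0; apply: decr => //.
have h2 : 0 <= z * (l^-1 - l'^-1).
  rewrite mulr_ge0 //.
  have -> : l^-1 - l'^-1 = (l' - l) / (l * l') by field; rewrite gt_eqF // gt_eqF.
  by rewrite divr_ge0 // ?mulr_ge0 //; lra.
have E : Kf phi v z l - Kf phi v z l' = 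
  \sum_(m < d) Wt phi v m * (l / (l - phi m) ^+ 2 - l' / (l' - phi m) ^+ 2) + z * (l^-1 - l'^-1).
  rewrite /Kf.
  have -> : \sum_(m < d) Wt phi v m * (l / (l - phi m) ^+ 2 - l' / (l' - phi m) ^+ 2) =
    \sum_(m < d) Wt phi v m * (l / (l - phi m) ^+ 2) - \sum_(m < d) Wt phi v m * (l' / (l' - phi m) ^+ 2).
    by rewrite -sumrB; apply: eq_bigr => m _; ring.
  ring.
move: E; rewrite K K' subrr => E.
have : 0 < \sum_(m < d) Wt phi v m * (l / (l - phi m) ^+ 2 - l' / (l' - phi m) ^+ 2) + z * (l^-1 - l'^-1).
  exact: ltr_pwDl.
by rewrite -E ltxx.
Qed.

Definition Pp (R : rcfType) d (phi : 'I_d -> R) (v : 'I_d -> R[i]) (z : R) : {poly R} :=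
  'X ^+ 2 * \sum_(m < d) ((Wt phi v m)%:P * \prod_(j < d | j != m) ('X - (phi j)%:P) ^+ 2)
  - ('X - z%:P) * \prod_(j < d) ('X - (phi j)%:P) ^+ 2.

Lemma Pp_fsec (R : rcfType) d (phi : 'I_d -> R) (v : 'I_d -> R[i]) (z x : R) :
  (forall j, x != phi j) ->
  (Pp phi v z).[x] = fsec phi v z x * \prod_(j < d) (x - phi j) ^+ 2.
Proof.
move=> hx; rewrite /Pp hornerD hornerN !hornerM horner_sum !horner_prod hornerXsubC.
have e1 : forall m : 'I_d, ((Wt phi v m)%:P * \prod_(j < d | j != m) ('X - (phi j)%:P) ^+ 2).[x]
   = Wt phi v m * \prod_(j < d | j != m) (x - phi j) ^+ 2.
  move=> m; rewrite hornerM hornerC horner_prod; congr (_ * _).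
  by apply: eq_bigr => j _; rewrite horner_exp hornerXsubC.
have e2 : \prod_(i < d) (('X - (phi i)%:P) ^+ 2).[x] = \prod_(i < d) (x - phi i) ^+ 2.
  by apply: eq_bigr => j _; rewrite horner_exp hornerXsubC.
rewrite e2 (eq_bigr _ (fun m _ => e1 m)) hornerX.
have H : (\sum_(i < d) phi i * ComplexField.Normc.normc (v i) ^+ 2 / (x - phi i) ^+ 2) *
     \prod_(j < d) (x - phi j) ^+ 2 = 
     \sum_(i < d) Wt phi v i * \prod_(j < d | j != i) (x - phi j) ^+ 2.
  rewrite mulr_suml; apply: eq_bigr => m _; rewrite (bigD1 m) //= /Wt.
  have : x - phi m != 0 by rewrite subr_eq0.
  move=> h; field; exact: h.
rewrite -H /fsec; ring.
Qed.

Lemma fsec_pos_near (R : rcfType) d (phi : 'I_d -> R) (v : 'I_d -> R[i]) (z a dl : R) (dm : 'I_d) :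
  (forall m, 0 < phi m) -> (forall m, v m != 0) -> 0 <= z ->
  (forall m, phi m <= phi dm) -> 0 < dl -> dl ^+ 2 <= phi dm * Wt phi v dm -> a = phi dm + dl ->
  0 < fsec phi v z a.
Proof.
move=> hpos hv hz hle hdl hdl2 ha.
have hW := Wt_gt0 (hpos dm) (hv dm).
have hd2 : 0 < dl ^+ 2 by rewrite exprn_gt0.
have hT : Wt phi v dm / dl ^+ 2 <=
   \sum_(m < d) phi m * ComplexField.Normc.normc (v m) ^+ 2 / (a - phi m) ^+ 2.
  rewrite (bigD1 dm) //=.
  have -> : a - phi dm = dl by rewrite ha; ring.
  rewrite /Wt lerDl; apply: sumr_ge0 => m _; apply: divr_ge0; last exact: sqr_ge0.
  by apply: mulr_ge0; [exact: ltW | exact: sqr_ge0].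
have hp := hpos dm.
have hA : 1 < a * Wt phi v dm / dl ^+ 2.
  rewrite ltr_pdivlMr // mul1r ha; nra.
have a0 : 0 < a by rewrite ha; lra.
have h1 : a * 1 < a * (a * Wt phi v dm / dl ^+ 2) by rewrite ltr_pM2l.
have h2 : a ^+ 2 * (Wt phi v dm / dl ^+ 2) <= a ^+ 2 *
   \sum_(m < d) phi m * ComplexField.Normc.normc (v m) ^+ 2 / (a - phi m) ^+ 2.
  by rewrite ler_wpM2l // exprn_ge0 // ltW.
have h3 : a * (a * Wt phi v dm / dl ^+ 2) = a ^+ 2 * (Wt phi v dm / dl ^+ 2) by rewrite expr2 !mulrA.
rewrite /fsec; move: h1 h2 h3.
set S := a ^+ 2 * \sum_(m < d) _; set T := a * (a * _ / _); set U := a ^+ 2 * _.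
move=> h1 h2 h3; lra.
Qed.

Lemma fsec_neg_far (R : rcfType) d (phi : 'I_d -> R) (v : 'I_d -> R[i]) (z b pm : R) :
  (forall m, 0 < phi m) -> (forall m, v m != 0) ->
  (forall m, phi m <= pm) -> 2 * pm <= b -> 4 * \sum_(m < d) Wt phi v m + z < b ->
  fsec phi v z b < 0.
Proof.
move=> hpos hv hle hb1 hb2.
have hS : b ^+ 2 * \sum_(m < d) phi m * ComplexField.Normc.normc (v m) ^+ 2 / (b - phi m) ^+ 2
   <= 4 * \sum_(m < d) Wt phi v m.
  rewrite !mulr_sumr; apply: ler_sum => m _.
  have hp := hpos m; have hl := hle m; have hW := Wt_gt0 (hpos m) (hv m).
  have hbp : 0 < (b - phi m) ^+ 2 by apply: sqr_pos; rewrite subr_eq0 gt_eqF //; lra.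
  rewrite -/(Wt phi v m) mulrA ler_pdivrMr //.
  have : b ^+ 2 <= 4 * (b - phi m) ^+ 2 by nra.
  move=> h; nra.
rewrite /fsec; lra.
Qed.

Lemma eq_le_cdef (R : rcfType) (a b : R) : a = b -> a <= b.
Proof. by move=> ->. Qed.

Lemma exists_root (R : rcfType) d (phi : 'I_d -> R) (v : 'I_d -> R[i]) (z : R) (dm : 'I_d) :
  (forall m, 0 < phi m) -> (forall m, v m != 0) -> 0 <= z ->
  (forall m, phi m <= phi dm) -> exists x, phi dm < x /\ is_root_f phi v z x.
Proof.
move=> hpos hv hz hle.
have hp := hpos dm; have hW := Wt_gt0 (hpos dm) (hv dm).
have hc : 0 < phi dm * Wt phi v dm by rewrite mulr_gt0.
have [c hcdef] : {c | c = phi dm * Wt phi v dm} by exists (phi dm * Wt phi v dm).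
rewrite -hcdef in hc.
have hdl : 0 < c / (1 + c) by rewrite divr_gt0 //; lra.
have hdl1 : c / (1 + c) < 1 by rewrite ltr_pdivrMr; lra.
have hdlc : c / (1 + c) <= c by rewrite ler_pdivrMr; nra.
have [dl Edl] : {dl | dl = c / (1 + c)} by exists (c / (1 + c)).
rewrite -Edl in hdl hdl1 hdlc.
have hdl2 : dl ^+ 2 <= c by rewrite expr2; nra.
have hWs : 0 <= \sum_(m < d) Wt phi v m by apply: sumr_ge0 => m _; apply: ltW; apply: Wt_gt0.
have [Ws hWsdef] : {Ws | Ws = \sum_(m < d) Wt phi v m} by exists (\sum_(m < d) Wt phi v m).
rewrite -hWsdef in hWs.
have fa := fsec_pos_near hpos hv hz hle hdl (le_trans hdl2 (eq_le_cdef hcdef)) (erefl (phi dm + dl)).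
have fb : fsec phi v z (2 * phi dm + 4 * Ws + z + 1) < 0.
  apply: (fsec_neg_far (pm := phi dm)) => //; rewrite ?hWsdef; lra.
have ne : forall x, phi dm < x -> forall j, x != phi j.
  by move=> x hx j; rewrite gt_eqF //; exact: (le_lt_trans (hle j)).
have Pi : forall x, phi dm < x -> 0 < \prod_(j < d) (x - phi j) ^+ 2.
  by move=> x hx; apply: prodr_gt0 => j _; apply: sqr_pos; rewrite subr_eq0 ne.
have hab : phi dm + dl <= 2 * phi dm + 4 * Ws + z + 1 by lra.
have hsg : (Pp phi v z).[phi dm + dl] * (Pp phi v z).[2 * phi dm + 4 * Ws + z + 1] < 0.
  rewrite !Pp_fsec; try (apply: ne; lra).
  rewrite pmulr_rlt0; last by rewrite mulr_gt0 // Pi //; lra.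
  by rewrite nmulr_rlt0 // Pi //; lra.
have [x] := poly_ivtoo hab hsg.
rewrite in_itv /= => /andP[xa xb] /rootP hr.
have hx : phi dm < x by lra.
exists x; split => //; split; first lra.
split; first exact: ne.
move: hr; rewrite Pp_fsec; last exact: ne.
move=> /eqP; rewrite mulf_eq0 (gt_eqF (Pi x hx)) orbF.
by move/eqP.
Qed.

Theorem lemma3 (R : rcfType) (d : nat) (z : R) (phi : 'I_d -> R)
  (v : 'I_d -> R[i]) (phimax : R)
  (hd : (1 <= d)%N) (hz : 0 <= z)
  (hpos : forall m : 'I_d, 0 < phi m)
  (hsort : forall m n : 'I_d, (m <= n)%N -> phi m <= phi n)
  (hv : forall m : 'I_d, v m != 0)
  (hmax : forall dm : 'I_d, val dm = d.-1 -> phimax = phi dm) :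
  (* (1) no roots smaller than or equal to z *)
  (forall l : R, is_root_f phi v z l -> z < l) /\
  (* (2) and (3): for phi_k the smallest eigenvalue larger than z *)
  (forall k : 'I_d, z < phi k -> (forall m : 'I_d, z < phi m -> phi k <= phi m) ->
     at_most_two_roots_in phi v z z (phi k) /\
     (forall L Lm1 : 'I_d, (k < L)%N -> val L = (val Lm1).+1 ->
        at_most_two_roots_in phi v z (phi Lm1) (phi L))) /\
  (* (4) a unique root in (max(phi_max, z), +oo) *)
  (exists l : R, Num.max phimax z < l /\ is_root_f phi v z l /\
     forall l' : R, Num.max phimax z < l' -> is_root_f phi v z l' -> l' = l).
Proof.
have hd0 : (0 < d)%N := hd.
have hdm : (d.-1 < d)%N by rewrite ltn_predL.
pose dm : 'I_d := Ordinal hdm.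
have hpm : phimax = phi dm by apply: hmax.
have hle : forall m, phi m <= phi dm.
  move=> m; apply: hsort => /=.
  by move: (ltn_ord m); rewrite -[X in (_ < X)%N](prednK hd0) ltnS.
split.
  by move=> l; exact: root_gt_z.
split.
  move=> k hk hkmin; split.
    apply: two_roots => // m.
    by case: (lerP (phi m) z) => h; [left | right; exact: hkmin].
  move=> L Lm1 hkL hL; apply: two_roots => //.
    exact: ltW (hpos Lm1).
  move=> m; case: (leqP m Lm1) => h; [left; exact: hsort | right; apply: hsort].
  by rewrite hL.
have [x [hx rx]] := exists_root hpos hv hz hle.
have hxz := root_gt_z hd0 hpos hv hz rx.
exists x; split; first by rewrite gt_max hpm hx hxz.
split => // l' hl' r'.
move: hl'; rewrite gt_max hpm => /andP[hl'1 _].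
case: (ltgtP l' x) => h //; exfalso.
  apply: (uniq_big (l := l') (l' := x)) hd0 hpos hv hz _ h r' rx.
  by move=> m; exact: (le_lt_trans (hle m)).
apply: (uniq_big (l := x) (l' := l')) hd0 hpos hv hz _ h rx r'.
by move=> m; exact: (le_lt_trans (hle m)).
Qed.
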